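(* Let $\mathbb{I}=\{\mathbb{I}_1,\dots,\mathbb{I}_N\}$ be a random iterated function system on a compact metric space $(K,d)$. Then for all $\omega\in\Omega$, $\dim_{\mathrm P}F_\omega=\overline{\dim}_{\mathrm B}F_\omega$.
   Context: A random iterated function system on $(K,d)$ is a finite set $\mathbb{I}=\{\mathbb{I}_1,\dots,\mathbb{I}_N\}$ with $\mathbb{I}_i=\{S_{i,j}\}_{j\in\mathcal{I}_i}$, $\mathcal{I}_i$ finite nonempty, each $S_{i,j}:K\to K$ a bi-Lipschitz contraction ($0<\inf_{x\ne y}\frac{d(S_{i,j}x,S_{i,j}y)}{d(x,y)}$ and $\sup_{x\ne y}\frac{d(S_{i,j}x,S_{i,j}y)}{d(x,y)}<1$). $\Omega=\{1,\dots,N\}^{\mathbb{N}}$ and $F_\omega=\bigcap_k\bigcup_{i_1\in\mathcal{I}_{\omega_1},\dots,i_k\in\mathcal{I}_{\omega_k}}S_{\omega_1,i_1}\circ\cdots\circ S_{\omega_k,i_k}(K)$. $\dim_{\mathrm P}$ is packing dimension and $\overline{\dim}_{\mathrm B}$ upper box dimension. *)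

(* Defs.v *)
From HB Require Import structures.
From mathcomp Require Import all_boot all_order all_algebra.
From mathcomp Require Import all_classical all_reals all_analysis.
Set Implicit Arguments. Unset Strict Implicit. Unset Printing Implicit Defensive.
Import Order.TTheory GRing.Theory Num.Theory.
Local Open Scope classical_set_scope.
Local Open Scope ring_scope.

Section MetricNotions.
Variables (R : realType) (T : Type) (d : T -> T -> R).

Definition is_metric : Prop :=
  [/\ forall x y, d x y = 0 <-> x = y,
      forall x y, d x y = d y x &
      forall x y z, d x z <= d x y + d y z].

Definition dball (x : T) (r : R) : set T := [set y | d x y < r].

Definition d_open (U : set T) : Prop :=
  forall x, U x -> exists2 e : R, 0 < e & dball x e `<=` U.

Definition d_compact_space : Prop :=
  forall (I : Type) (U : I -> set T),
    (forall i, d_open (U i)) -> \bigcup_(i in setT) U i = setT ->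
    exists (n : nat) (f : 'I_n -> I), forall x, exists i, U (f i) x.

Definition bilip_contraction (S : T -> T) : Prop :=
  (exists2 a : R, 0 < a & forall x y, x <> y -> a <= d (S x) (S y) / d x y) /\
  (exists2 b : R, b < 1 & forall x y, x <> y -> d (S x) (S y) / d x y <= b).

Definition ddiam (A : set T) : \bar R :=
  ereal_sup [set (d x y)%:E | x in A & y in A].

Definition limsup0 (f : R -> \bar R) : \bar R :=
  ereal_inf [set ereal_sup [set f δ | δ in [set δ | 0 < δ < ε]] | ε in [set ε | 0 < ε]].

Definition cover_number (δ : R) (F : set T) : \bar R :=
  ereal_inf [set (n%:R)%:E | n in [set n : nat | exists U : 'I_n -> set T,
     (forall i, (ddiam (U i) <= δ%:E)%E) /\ F `<=` \bigcup_(i in setT) U i]].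

Definition upper_box_dim (F : set T) : \bar R :=
  limsup0 (fun δ => match cover_number δ F with
                    | EFin n => (ln n / (- ln δ))%:E
                    | +oo%E => +oo%E
                    | -oo%E => -oo%E end).

Definition packing_delta (s δ : R) (F : set T) : \bar R :=
  ereal_sup [set v : \bar R | exists (n : nat) (x : 'I_n -> T) (r : 'I_n -> R),
     [/\ forall i, F (x i) /\ 0 < r i <= δ,
         forall i j, i != j -> dball (x i) (r i) `&` dball (x j) (r j) = set0 &
         v = (\sum_(i < n) ((2 * r i) `^ s)%:E)%E]].

Definition packing_premeasure (s : R) (F : set T) : \bar R :=
  limsup0 (fun δ => packing_delta s δ F).

Definition packing_measure (s : R) (F : set T) : \bar R :=
  ereal_inf [set (\sum_(i <oo) packing_premeasure s (G i))%E |
     G in [set G : nat -> set T | F `<=` \bigcup_(i in setT) G i]].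

Definition packing_dim (F : set T) : \bar R :=
  ereal_inf [set s%:E | s in [set s : R | 0 <= s /\ packing_measure s F = 0%E]].

End MetricNotions.

(** Random IFS: N families; family i is indexed by 'I_(M i) (M i > 0),
    maps S i j : T -> T.  Level-k set:
    lvl k w = U_{j} S_{w 0, j} (lvl (k-1) (shift w)), lvl 0 w = K. *)
Fixpoint rifs_level (T : Type) (N : nat) (M : 'I_N -> nat)
    (S : forall i : 'I_N, 'I_(M i) -> T -> T) (k : nat) (w : nat -> 'I_N) : set T :=
  match k with
  | 0 => setT
  | k'.+1 => \bigcup_(j in [set: 'I_(M (w 0))])
               (S (w 0) j @` rifs_level S k' (fun n => w n.+1))
  end.

Definition rifs_attractor (T : Type) (N : nat) (M : 'I_N -> nat)
    (S : forall i : 'I_N, 'I_(M i) -> T -> T) (w : nat -> 'I_N) : set T :=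
  \bigcap_(k in [set: nat]) rifs_level S k w.

(* Main.v *)
Require Import Defs.
From HB Require Import structures.
From mathcomp Require Import all_boot all_order all_algebra.
From mathcomp Require Import all_classical all_reals all_analysis.
From mathcomp Require Import lra ring.
Import Order.TTheory GRing.Theory Num.Theory.
Local Open Scope classical_set_scope.
Local Open Scope ring_scope.

Set Implicit Arguments. Unset Strict Implicit. Unset Printing Implicit Defensive.

Section Metric.
Variables (R : realType) (T : Type) (d : T -> T -> R).
Hypothesis dm : is_metric d.

Lemma d0 x : d x x = 0.
Proof. by case: dm => h _ _; exact: (proj2 (h x x) erefl). Qed.
Lemma dsym x y : d x y = d y x.
Proof. by case: dm. Qed.
Lemma dtri x y z : d x z <= d x y + d y z.
Proof. by case: dm. Qed.
Lemma deq0 x y : d x y = 0 -> x = y.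
Proof. by case: dm => h _ _; exact: (proj1 (h x y)). Qed.
Lemma dge0 x y : 0 <= d x y.
Proof.
have := dtri x y x; rewrite d0 (dsym y x) => h.
by rewrite -(@pmulr_rge0 _ 2) // mulr2n mulrDl !mul1r.
Qed.

Definition dint (A : set T) : set T := [set x | exists2 e, 0 < e & dball d x e `<=` A].

Lemma dint_open A : d_open d (dint A).
Proof.
move=> x [e e0 hA]; exists e => // y hy.
have hy' : 0 < e - d x y by rewrite subr_gt0.
exists (e - d x y) => // z hz; apply: hA; rewrite /dball /=.
have := dtri x y z; move: hz; rewrite /dball /= => hz h.
by rewrite (le_lt_trans h) // -ltrBrDl.
Qed.

Lemma dint_sub A : dint A `<=` A.
Proof. by move=> x [e e0]; apply; rewrite /dball /= d0. Qed.

Lemma dint_mono A B : A `<=` B -> dint A `<=` dint B.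
Proof. by move=> AB x [e e0 h]; exists e => // y /h /AB. Qed.

Hypothesis dc : d_compact_space d.

Lemma compact_incr (U : nat -> set T) :
  (forall n, d_open d (U n)) -> (forall n, U n `<=` U n.+1) ->
  (forall x, exists n, U n x) -> exists N, forall x, U N x.
Proof.
move=> Uo Ui Uc.
have Umono n m : (n <= m)%N -> U n `<=` U m.
  move=> /subnK <-; elim: (m - n)%N => [|k IH] //= x /IH; exact: Ui.
have hU : \bigcup_(i in setT) U i = setT.
  by apply/seteqP; split => // x _; have [n hn] := Uc x; exists n.
have [n [f hf]] := dc Uo hU.
exists (\max_(i < n) f i)%N => x; have [i hi] := hf x.
by apply: Umono hi; apply: (leq_bigmax_cond i).
Qed.

Lemma dbounded : exists D, 0 <= D /\ forall x y, d x y <= D.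
Proof.
have [[t0 _]|hT] := pselect (exists t : T, True); last first.
  by exists 0; split => // x; case: hT; exists x.
have [|||N hN] := @compact_incr (fun n => dball d t0 n%:R).
- move=> n x hx; exists (n%:R - d t0 x); first by rewrite subr_gt0.
  move=> y hy; rewrite /dball /=; apply: (le_lt_trans (dtri t0 x y)).
  by rewrite -ltrBrDl.
- by move=> n x; rewrite /dball /= => h; rewrite (lt_le_trans h) // ler_nat.
- move=> x; exists (Num.truncn (d t0 x)).+1; rewrite /dball /=.
  by rewrite truncnS_gt.
exists (N%:R + N%:R); split; first by rewrite addr_ge0.
move=> x y; apply: (le_trans (dtri x t0 y)); rewrite dsym.
by apply: lerD; apply: ltW; apply: hN.
Qed.

End Metric.

Section Arith.
Variable R : realType.

Lemma exists_pow_lt (q e : R) : 0 <= q < 1 -> 0 < e -> exists j : nat, q ^+ j < e.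
Proof.
move=> /andP[q0 q1] e0.
have hq : `|q| < 1 by rewrite ger0_norm.
have := cvg_expr hq.
move/cvgrPdist_lt => /(_ e e0) [N _ hN].
exists N; have := hN N (leqnn N); rewrite sub0r normrN ger0_norm //.
exact: exprn_ge0.
Qed.

Lemma geom_le (z : R) J : 0 <= z < 1 -> \sum_(j < J) z ^+ j <= (1 - z)^-1.
Proof.
move=> /andP[z0 z1].
have key : (\sum_(j < J) z ^+ j) * (1 - z) = 1 - z ^+ J.
  elim: J => [|J IH]; first by rewrite big_ord0 mul0r expr0 subrr.
  rewrite big_ord_recr /= mulrDl IH exprS; ring.
have hz : 0 < 1 - z by rewrite subr_gt0.
rewrite -(ler_pM2r hz) key mulVf ?gt_eqF //.
by rewrite lerBlDr lerDl exprn_ge0.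
Qed.

Lemma powR_exprn (a x : R) j : 0 <= a -> (a ^+ j) `^ x = (a `^ x) ^+ j.
Proof.
move=> a0; elim: j => [|j IH]; first by rewrite !expr0 powR1.
by rewrite !exprS powRM ?exprn_ge0 // IH.
Qed.

Lemma sum_ind_card n (P : pred 'I_n) : \sum_(i < n) (P i)%:R = #|P|%:R :> R.
Proof.
rewrite -sum1_card natr_sum [RHS]big_mkcond /=; apply: eq_bigr => i _.
by rewrite unfold_in; case: (P i).
Qed.

Lemma dyadic_bound (s t δ : R) n (r : 'I_n -> R) :
  0 <= t -> t < s -> 0 < δ ->
  (forall i, 0 < r i <= δ) ->
  (forall j : nat, #|[pred i : 'I_n | ((2^-1)^+j.+1 * δ < r i)%R]|%:R
      <= ((2^-1)^+j.+1 * δ) `^ (-t)) ->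
  \sum_(i < n) (2 * r i) `^ s <=
    2 `^ s * (2^-1) `^ (-t) / (1 - (2^-1) `^ (s - t)) * δ `^ (s - t).
Proof.
move=> t0 ts d0 hr hc.
set q : R := 2^-1.
have q0 : 0 < q by rewrite invr_gt0.
have q1 : q < 1 by rewrite invf_lt1 // ltr1n.
have hq01 : 0 <= q < 1 by rewrite (ltW q0) q1.
have s0 : 0 <= s by apply: ltW; exact: le_lt_trans ts.
have H1 i : exists j : nat, q ^+ j.+1 * δ < r i /\ r i <= q ^+ j * δ.
  have [ri0 riδ] := andP (hr i).
  have hex : exists j, q ^+ j.+1 * δ < r i.
    have [j hj] := @exists_pow_lt q (r i / δ) hq01 (divr_gt0 ri0 d0).
    exists j; rewrite -ltr_pdivlMr //; apply: le_lt_trans hj.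
    by rewrite exprS ler_piMl ?exprn_ge0 // ltW.
  have hex' : exists j, `[< q ^+ j.+1 * δ < r i >] by case: hex => j hj; exists j; apply/asboolP.
  case: (ex_minnP hex') => j /asboolP hj hmin; exists j; split => //.
  case: j hj hmin => [|j] hj hmin; first by rewrite expr0 mul1r.
  rewrite leNgt; apply/negP => hlt.
  have := hmin j (asboolT hlt); by rewrite ltnn.
have [jf hjf] := choice H1.
set J := (\max_i jf i).+1.
pose c := fun j : nat => (2 * q ^+ j * δ) `^ s.
have c0 j : 0 <= c j by exact: powR_ge0.
have per i : (2 * r i) `^ s <= \sum_(j < J) ((q ^+ j.+1 * δ < r i)%R)%:R * c j.
  have jJ : (jf i < J)%N by rewrite ltnS; exact: leq_bigmax.
  rewrite (bigD1 (Ordinal jJ)) //=.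
  have [h1 h2] := hjf i; rewrite h1 mul1r.
  have hrest : 0 <= \sum_(j < J | j != Ordinal jJ) ((q ^+ j.+1 * δ < r i)%R)%:R * c j.
    by apply: sumr_ge0 => j _; rewrite mulr_ge0.
  have hle : (2 * r i) `^ s <= c (jf i).
    rewrite /c; apply: ge0_ler_powR => //; rewrite ?nnegrE.
    - by rewrite mulr_ge0 // ltW //; case/andP: (hr i).
    - by rewrite !mulr_ge0 ?exprn_ge0 // ltW.
    - by rewrite -mulrA ler_pM2l.
  lra.
have z0 : 0 <= q `^ (s - t) by exact: powR_ge0.
have z1 : q `^ (s - t) < 1.
  rewrite /powR gt_eqF // expR_lt1 pmulr_rlt0 ?subr_gt0 //.
  by apply: ln_lt0; rewrite q0 q1.
have hq0 : q != 0 by rewrite gt_eqF.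
have hd0 : δ != 0 by rewrite gt_eqF.
have eqj (j : nat) : ((q ^+ j.+1 * δ) `^ (-t)) * c j =
    2 `^ s * q `^ (-t) * (q `^ (s - t)) ^+ j * δ `^ (s - t).
  rewrite /c powRM ?exprn_ge0 ?(ltW q0) ?(ltW d0) //.
  rewrite powRM ?mulr_ge0 ?exprn_ge0 ?(ltW q0) ?(ltW d0) //.
  rewrite powRM ?exprn_ge0 ?(ltW q0) //.
  rewrite !powR_exprn ?(ltW q0) //.
  rewrite (powRD (x:=q)) ?hq0 ?implybT // (powRD (x:=δ)) ?hd0 ?implybT //.
  rewrite exprMn exprS; ring.
apply: (le_trans (ler_sum _ (fun i _ => per i))).
rewrite exchange_big /=.
under eq_bigr do rewrite -mulr_suml sum_ind_card.
apply: le_trans.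
  apply: ler_sum => j _; apply: (ler_wpM2r (c0 j)); exact: (hc j).
under eq_bigr do rewrite eqj.
rewrite -mulr_suml -mulr_sumr.
apply: ler_wpM2r; first exact: powR_ge0.
apply: ler_wpM2l; first by rewrite mulr_ge0 ?powR_ge0.
by apply: geom_le; rewrite z0 z1.
Qed.

Lemma limsup0_ge (f : R -> \bar R) c :
  (forall δ, 0 < δ < 1 -> (c <= f δ)%E) -> (c <= limsup0 f)%E.
Proof.
move=> h; apply/ereal_infP => _ [ε ε0 <-].
have hm1 : Order.min ε 1 <= ε by rewrite ge_min lexx.
have hm2 : Order.min ε 1 <= 1 by rewrite ge_min lexx orbT.
have m0 : 0 < Order.min ε 1 by rewrite lt_min ε0 ltr01.
apply: le_ereal_sup_tmp; exists (f (Order.min ε 1 / 2)).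
  exists (Order.min ε 1 / 2) => //; apply/andP; split; lra.
by apply: h; apply/andP; split; lra.
Qed.

Lemma limsup0_le (f : R -> \bar R) :
  (forall η : R, 0 < η -> exists2 ε : R, 0 < ε &
     forall δ, 0 < δ < ε -> (f δ <= η%:E)%E) -> (limsup0 f <= 0)%E.
Proof.
move=> h; apply/lee_addgt0Pr => η η0; rewrite add0e.
have [ε ε0 hε] := h η η0.
apply: ge_ereal_inf; exists (ereal_sup [set f δ | δ in [set δ | 0 < δ < ε]]).
  by exists ε.
by apply/ereal_supP => _ [δ hδ <-]; exact: hε.
Qed.

Lemma limsup0_lt (f : R -> \bar R) (t : R) : (limsup0 f < t%:E)%E ->
  exists2 ε : R, 0 < ε & forall δ, 0 < δ < ε -> (f δ < t%:E)%E.
Proof.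
move=> /ereal_inf_lt [_ [ε ε0 <-] hlt]; exists ε => // δ hδ.
apply: le_lt_trans hlt; apply: ereal_sup_ubound; by exists δ.
Qed.

Lemma limsup0_gt (f : R -> \bar R) (t : R) : (t%:E < limsup0 f)%E ->
  forall ε : R, 0 < ε -> exists δ, 0 < δ < ε /\ (t%:E < f δ)%E.
Proof.
move=> h ε ε0; move: h; rewrite /limsup0 => h.
have /ereal_sup_gt [_ [δ hδ <-] ht] :=
  lt_le_trans h (ereal_inf_lbound (ex_intro2 _ _ ε ε0 erefl)).
by exists δ.
Qed.


Lemma halfpow_lt1 (x : R) : 0 < x -> (2^-1 : R) `^ x < 1.
Proof.
move=> x0; have q0 : (0 : R) < 2^-1 by rewrite invr_gt0.
rewrite /powR gt_eqF // expR_lt1 pmulr_rlt0 //.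
by apply: ln_lt0; rewrite q0 invf_lt1 // ltr1n.
Qed.

End Arith.

Unset Implicit Arguments.

Section IFS.
Variables (R : realType) (T : Type) (d : T -> T -> R).
Hypothesis dm : is_metric d.
Variables (N : nat) (M : 'I_N -> nat) (S : forall i : 'I_N, 'I_(M i) -> T -> T).
Hypothesis HM : forall i, (0 < M i)%N.
Hypothesis HS : forall i j, bilip_contraction d (S i j).

Lemma contr_consts : exists a b : R, [/\ 0 < a, a <= 1, 0 <= b, b < 1 &
  forall i j x y, a * d x y <= d (S i j x) (S i j y) /\ d (S i j x) (S i j y) <= b * d x y].
Proof.
pose P := {i : 'I_N & 'I_(M i)}.
have H1 (p : P) : exists ab : R * R, [/\ 0 < ab.1, ab.2 < 1 &
  forall x y, ab.1 * d x y <= d (S (tag p) (tagged p) x) (S (tag p) (tagged p) y) /\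
     d (S (tag p) (tagged p) x) (S (tag p) (tagged p) y) <= ab.2 * d x y].
  have [[a a0 ha] [b b1 hb]] := HS (tag p) (tagged p).
  exists (a, b); split => // x y /=.
  have [->|xy] := pselect (x = y); first by rewrite !d0 // !mulr0.
  have dxy : 0 < d x y.
    rewrite lt_neqAle dge0 // andbT; apply/eqP => h; apply: xy; exact: deq0 dm _ _ (esym h).
  by split; [rewrite -ler_pdivlMr // ; exact: ha | rewrite -ler_pdivrMr //; exact: hb].
have [f hf] := choice H1.
exists (Order.min 1 (\big[Order.min/1]_p (f p).1)), (Order.max 0 (\big[Order.max/0]_p (f p).2)).
split.
- rewrite lt_min ltr01 /=; apply: lt_bigmin => // p _; by case: (hf p).
- by rewrite ge_min lexx.
- by rewrite le_max lexx.
- rewrite gt_max ltr01 /=; apply: bigmax_lt => // p _; by case: (hf p).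
move=> i j x y; have [_ _ /(_ x y) [h1 h2]] := hf (Tagged (fun i => 'I_(M i)) j).
split.
- apply: le_trans h1; apply: ler_wpM2r; first exact: dge0.
  by rewrite ge_min; apply/orP; right; exact: bigmin_le.
- apply: le_trans h2 _; apply: ler_wpM2r; first exact: dge0.
  by rewrite le_max; apply/orP; right; exact: le_bigmax.
Qed.


Lemma Slip i j x y : d (S i j x) (S i j y) <= d x y.
Proof.
have [a [b [_ _ b0 b1 h]]] := contr_consts.
have [_ /le_trans -> //] := h i j x y.
by rewrite ler_piMl // ?dge0 // ltW.
Qed.

Lemma Sinj i j x y : S i j x = S i j y -> x = y.
Proof.
have [a [b [a0 _ _ _ h]]] := contr_consts.
move=> e; have [h1 _] := h i j x y; move: h1; rewrite e d0 // => h1.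
apply: (deq0 dm); apply/eqP; rewrite eq_le dge0 // andbT.
by rewrite -(@pmulr_rle0 _ a).
Qed.

Definition closedd (A : set T) := forall p, ~ A p ->
  exists2 e, 0 < e & forall z, d p z < e -> ~ A z.

Lemma closed_bigcap (I : Type) (A : I -> set T) :
  (forall i, closedd (A i)) -> closedd (\bigcap_(i in setT) A i).
Proof.
move=> h p hp.
have [i nip] : exists i, ~ A i p.
  by apply/existsNP => h'; apply: hp => i _; exact: h'.
have [e e0 he] := h i p nip; exists e => // z /he hz hz'; apply: hz; exact: hz'.
Qed.

Lemma closed_funion (I : finType) (A : I -> set T) :
  (forall i, closedd (A i)) -> closedd (\bigcup_(i in setT) A i).
Proof.
move=> h p hp.
have H1 i : exists e : R, 0 < e /\ forall z, d p z < e -> ~ A i z.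
  have [e e0 he] := h i p (fun hi => hp (ex_intro2 _ _ i Logic.I hi)).
  by exists e.
have [e he] := choice H1.
exists (\big[Order.min/1]_i e i).
  by apply: lt_bigmin => // i _; case: (he i).
move=> z hz [i _ hi]; case: (he i) => _ /(_ z); apply => //.
by apply: (lt_le_trans hz); exact: bigmin_le.
Qed.

Hypothesis dc : d_compact_space d.

Lemma closed_img (f : T -> T) (A : set T) :
  (forall x y, d (f x) (f y) <= d x y) -> closedd A -> closedd (f @` A).
Proof.
move=> fl cA p hp.
pose V (n : nat) := [set z | n.+1%:R^-1 < d (f z) p \/ ~ A z].
have [|||K hK] := @compact_incr R T d dc (fun n => dint d (V n)).
- by move=> n; exact: dint_open.
- move=> n; apply: dint_mono => z [h|h]; [left|by right].
  apply: lt_trans h; rewrite ltf_pV2 ?posrE // ltr_nat //.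
- move=> x; have [Ax|nAx] := pselect (A x); last first.
    have [e e0 he] := cA x nAx; exists 0%N, e => // z /he hz; by right.
  have c0 : 0 < d (f x) p.
    rewrite lt_neqAle dge0 // andbT; apply/eqP => h; apply: hp; exists x => //.
    by apply: (deq0 dm); rewrite h.
  set c := d (f x) p in c0 *.
  exists (Num.truncn (2 / c)), (c / 2); first by rewrite divr_gt0.
  move=> z hz; left; rewrite /dball /= in hz.
  have h1 : c - d x z <= d (f z) p.
    rewrite lerBlDr /c; apply: (le_trans (dtri dm (f x) (f z) p)).
    by rewrite addrC lerD2l; apply: fl.
  apply: lt_le_trans h1.
  have h2 : 1 / (Num.truncn (2 / c)).+1%:R < c / 2.
    rewrite ltr_pdivrMr // mulrC -ltr_pdivrMr ?divr_gt0 //.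
    by rewrite div1r invf_div truncnS_gt.
  rewrite -div1r; apply: (lt_le_trans h2).
  lra.
exists K.+1%:R^-1; first by rewrite invr_gt0.
move=> z hz [y Ay ey]; subst z.
have [] := dint_sub dm (hK y) => // h.
by move: hz; rewrite (dsym dm) => /(lt_trans h); rewrite ltxx.
Qed.


Definition shift (w : nat -> 'I_N) : nat -> 'I_N := fun n => w n.+1.
Definition Att (w : nat -> 'I_N) : set T := rifs_attractor S w.
Definition lvl (n : nat) (w : nat -> 'I_N) : set T := rifs_level S n w.

Lemma lvl_S n w : lvl n.+1 w =
  \bigcup_(j in [set: 'I_(M (w 0))]) (S (w 0) j @` lvl n (shift w)).
Proof. by []. Qed.

Lemma lvl_nest n w : lvl n.+1 w `<=` lvl n w.
Proof.
elim: n w => [|n IH] w x //; rewrite lvl_S => -[j _ [y hy <-]].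
by rewrite lvl_S; exists j => //; exists y => //; exact: IH.
Qed.

Lemma lvl_mono n m w : (n <= m)%N -> lvl m w `<=` lvl n w.
Proof.
move=> /subnK <-; elim: (m - n)%N => [|k IH] //= x /lvl_nest; exact: IH.
Qed.

Lemma AttP w x : Att w x <-> forall n, lvl n w x.
Proof. by split => [h n|h n _]; [exact: h|exact: h]. Qed.

Lemma att_sub_step w j : S (w 0) j @` Att (shift w) `<=` Att w.
Proof.
move=> _ [y /AttP hy <-]; apply/AttP => -[|n] //.
by rewrite lvl_S; exists j => //; exists y.
Qed.

Lemma att_step w x : Att w x ->
  exists j y, Att (shift w) y /\ x = S (w 0) j y.
Proof.
move/AttP => hx.
have [j hj] : exists j, forall n, exists y, lvl n (shift w) y /\ x = S (w 0) j y.
  apply/not_existsP => hn.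
  have H1 : forall j : 'I_(M (w 0)), exists n : nat,
      ~ exists y, lvl n (shift w) y /\ x = S (w 0) j y.
    by move=> j; apply/existsNP; exact: hn.
  have [nf hnf] := choice H1.
  have := hx (\max_j nf j).+1; rewrite lvl_S => -[j _ [y hy ey]].
  apply: (hnf j); exists y; split => //.
  by apply: lvl_mono hy; exact: leq_bigmax.
have [y0 [_ e0]] := hj 0%N.
exists j, y0; split => //; apply/AttP => n.
have [y [hy ey]] := hj n.
by rewrite (Sinj _ _ _ _ (etrans (esym e0) ey)).
Qed.


Lemma lvl_closed n w : closedd (lvl n w).
Proof.
elim: n w => [|n IH] w; first by move=> p hp; exfalso; apply: hp.
rewrite lvl_S; apply: closed_funion => j; apply: closed_img => //.
exact: Slip.
Qed.

Lemma att_closed w : closedd (Att w).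
Proof. by apply: closed_bigcap => n; exact: lvl_closed. Qed.

Definition Word (w : nat -> 'I_N) := forall m, 'I_(M (w m)).
Definition wshift w (v : Word w) : Word (shift w) := fun m => v m.+1.
Definition wcons w (j : 'I_(M (w 0))) (v : Word (shift w)) : Word w :=
  fun m => match m as m0 return 'I_(M (w m0)) with 0 => j | m'.+1 => v m' end.
Arguments wshift {w} v m.
Arguments wcons {w} j v m.
Definition wdef w : Word w := fun m => Ordinal (HM (w m)).

Fixpoint cyl (w : nat -> 'I_N) (k : nat) (v : Word w) {struct k} : set T :=
  match k with
  | 0 => Att w
  | k'.+1 => S (w 0) (v 0) @` cyl (shift w) k' (wshift v)
  end.

Definition agree w k (v v' : Word w) := forall m, (m < k)%N -> v' m = v m.
Arguments agree {w} k v v'.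

Lemma cyl_att k w v : cyl w k v `<=` Att w.
Proof.
elim: k w v => [|k IH] w v //= _ [y hy <-]; apply: att_sub_step; exists y => //.
exact: IH hy.
Qed.

Lemma cyl_nest k m w v v' : agree k v v' -> cyl w (k + m) v' `<=` cyl w k v.
Proof.
elim: k w v v' => [|k IH] w v v' hag; first exact: cyl_att.
move=> _ [y hy <-]; rewrite (hag 0%N isT); exists y => //.
apply: (IH (shift w) (wshift v) (wshift v')) hy => i hi; exact: hag.
Qed.

Lemma att_refine m w y : Att w y -> exists v, cyl w m v y.
Proof.
elim: m w y => [|m IH] w y hy; first by exists (wdef w).
have [j [y' [hy' ->]]] := att_step _ _ hy.
have [v hv] := IH _ _ hy'.
by exists (wcons j v); exists y'.
Qed.

Lemma cyl_refine k w v y : cyl w k v y ->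
  forall m, exists v', agree k v v' /\ cyl w (k + m) v' y.
Proof.
elim: k w v y => [|k IH] w v y hy m.
  by have [v' hv'] := att_refine m _ _ hy; exists v'.
case: hy => y' hy' <-.
have [v'' [hag hc]] := IH _ _ _ hy' m.
exists (wcons (v 0) v''); split; last by exists y'.
by case => [|i] // hi; exact: hag.
Qed.

Lemma cyl_diam D b : (forall x y, d x y <= D) -> 0 <= b ->
  (forall i j x y, d (S i j x) (S i j y) <= b * d x y) ->
  forall k w v x y, cyl w k v x -> cyl w k v y -> d x y <= b ^+ k * D.
Proof.
move=> hD b0 hb; elim=> [|k IH] w v x y; first by rewrite expr0 mul1r.
move=> [x' hx' <-] [y' hy' <-]; apply: (le_trans (hb _ _ _ _)).
by rewrite exprS -mulrA ler_wpM2l //; exact: IH hx' hy'.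
Qed.


Definition cvr (δ : R) (A : set T) (I : finType) (U : I -> set T) : Prop :=
  (forall i x y, U i x -> U i y -> d x y <= δ) /\ A `<=` \bigcup_(i in setT) U i.

Definition covset (δ : R) (A : set T) := [set n : nat | exists U : 'I_n -> set T,
     (forall i, (ddiam d (U i) <= δ%:E)%E) /\ A `<=` \bigcup_(i in setT) U i].

Lemma ddiam_le (U : set T) δ :
  (ddiam d U <= δ%:E)%E <-> forall x y, U x -> U y -> d x y <= δ.
Proof.
split => [h x y ux uy|h].
  by rewrite -lee_fin; apply: le_trans h; apply: ereal_sup_ubound; exists x => //; exists y.
by apply/ereal_supP => _ [x ux [y uy <-]]; rewrite lee_fin; exact: h.
Qed.

Lemma covset_cvr δ A (I : finType) U : cvr δ A I U -> covset δ A #|I|.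
Proof.
move=> [hd hc]; exists (fun i => U (enum_val i)); split.
  by move=> i; apply: (proj2 (ddiam_le _ _)) => x y; exact: hd.
move=> x /hc [i _ hi]; exists (enum_rank i) => //; by rewrite enum_rankK.
Qed.

Lemma cvr_covset δ A n : covset δ A n -> exists U, cvr δ A 'I_n U.
Proof.
move=> [U [hd hc]]; exists U; split; last exact: hc.
move=> i x y ux uy; exact: (proj1 (ddiam_le (U i) δ) (hd i) x y ux uy).
Qed.

Lemma cn_cases δ A :
  (cover_number d δ A = +oo%E /\ forall n, ~ covset δ A n) \/
  exists k, [/\ cover_number d δ A = (k%:R)%:E, covset δ A k &
     forall n, covset δ A n -> (k <= n)%N].
Proof.
have [[n0 hn0]|hno] := pselect (exists n, covset δ A n); last first.
  left; split; last by move=> n hn; apply: hno; exists n.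
  rewrite /cover_number; apply/ereal_inf_pinfty => z [n hn hz]; exfalso.
  by apply: hno; exists n.
right.
have hex : exists n, `[< covset δ A n >] by exists n0; apply/asboolP.
case: (ex_minnP hex) => k /asboolP hk hmin.
exists k; split => //; last by move=> n hn; apply: hmin; apply/asboolP.
apply/eqP; rewrite eq_le; apply/andP; split.
  by apply: ereal_inf_lbound; exists k.
apply/ereal_infP => _ [n hn <-]; rewrite lee_fin ler_nat; apply: hmin.
exact/asboolP.
Qed.

Lemma cvr_pre (f : T -> T) a δ A (I : finType) U : 0 < a ->
  (forall x y, a * d x y <= d (f x) (f y)) ->
  cvr δ (f @` A) I U -> cvr (δ / a) A I (fun i => f @^-1` U i).
Proof.
move=> a0 hf [hd hc]; split.
  move=> i x y ux uy; rewrite ler_pdivlMr // mulrC.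
  exact: le_trans (hf x y) (hd _ _ _ ux uy).
move=> x Ax; have [i _ hi] := hc (f x) (ex_intro2 _ _ x Ax erefl).
by exists i.
Qed.

Lemma cvr_union (J : finType) (f : J -> T -> T) δ A B (I : finType) U :
  A `<=` \bigcup_(j in setT) (f j @` B) ->
  (forall j x y, d (f j x) (f j y) <= d x y) ->
  cvr δ B I U -> cvr δ A (J * I)%type (fun p => f p.1 @` U p.2).
Proof.
move=> hAB hf [hd hc]; split.
  move=> [j i] _ _ [x ux <-] [y uy <-] /=.
  exact: le_trans (hf j x y) (hd _ _ _ ux uy).
move=> x /hAB [j _ [b /hc [i _ hi] <-]]; exists (j, i) => //.
by exists b.
Qed.

Fixpoint Pw (w : nat -> 'I_N) (k : nat) : nat :=
  match k with 0 => 1%N | k'.+1 => (M (w 0) * Pw (shift w) k')%N end.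

Lemma cyl_cover (a : R) : 0 < a ->
  (forall i j x y, a * d x y <= d (S i j x) (S i j y)) ->
  forall k w v δ (I : finType) U, cvr δ (cyl w k v) I U ->
  exists (J : finType) U', cvr (δ / a ^+ k) (Att w) J U' /\ #|J| = (Pw w k * #|I|)%N.
Proof.
move=> a0 ha; elim=> [|k IH] w v δ I U hc.
  by exists I, U; rewrite expr0 divr1 mul1n.
have hc' := cvr_pre (S (w 0) (v 0)) a δ _ I U a0 (ha _ _) hc.
have [J [U' [hJ eJ]]] := IH _ _ _ _ _ hc'.
have hA : Att w `<=` \bigcup_(j in setT) (S (w 0) j @` Att (shift w)).
  move=> x /att_step [j [y [hy ->]]]; exists j => //; exists y => //.
have hfin := cvr_union _ _ _ _ _ _ _ hA (fun j => Slip (w 0) j) hJ.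
exists ('I_(M (w 0)) * J)%type, (fun p => S (w 0) p.1 @` U' p.2); split.
  by rewrite exprS invfM mulrA.
by rewrite card_prod card_ord eJ /= mulnA.
Qed.


Lemma pack_count ρ A (I : finType) U n (x : 'I_n -> T) (r : 'I_n -> R) :
  cvr ρ A I U -> (forall i, A (x i)) -> (forall i, 0 < r i) ->
  (forall i j, i != j -> dball d (x i) (r i) `&` dball d (x j) (r j) = set0) ->
  (#|[pred i : 'I_n | (ρ < r i)%R]| <= #|I|)%N.
Proof.
move=> [hd hc] hA hr hdis.
have H1 i : exists c : I, U c (x i) by have [c _ hcx] := hc _ (hA i); exists c.
have [c hcf] := choice H1.
apply: (@leq_card_in _ _ c) => i j; rewrite !inE => ri rj eij.
apply: contrapT => nij; have nij' : i != j by apply/eqP.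
have : (dball d (x i) (r i) `&` dball d (x j) (r j)) (x j).
  split; rewrite /dball /=; last by rewrite d0.
  apply: le_lt_trans ri; apply: (hd (c i)); first exact: hcf.
  by rewrite eij; exact: hcf.
by rewrite (hdis i j nij').
Qed.

Lemma greedy (t0 : T) (ρ : R) (C G : set T) (X : R) : 0 < ρ ->
  (forall e, C e -> forall eps : R, 0 < eps -> exists2 y, G y & d e y < eps) ->
  (forall (I : finType) U, cvr (6 * ρ) C I U -> X < #|I|%:R) ->
  forall m : nat, m%:R <= X + 1 -> exists y : nat -> T,
    (forall i, (i < m)%N -> G (y i)) /\
    (forall i j, (i < m)%N -> (j < m)%N -> i != j -> 2 * ρ <= d (y i) (y j)).
Proof.
move=> r0 hcl hX; elim=> [|m IH] hm.
  by exists (fun _ => t0); split.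
have hm' : m%:R <= X by move: hm; rewrite -natr1 lerD2r.
have hm1 : m%:R <= X + 1 by apply: (le_trans hm'); rewrite lerDl.
have [y [hG hsep]] := IH hm1.
have hnc : ~ (forall e, C e -> exists i : 'I_m, d (y i) e < 3 * ρ).
  move=> hall.
  have : X < #|'I_m|%:R.
    apply: (hX 'I_m (fun i : 'I_m => dball d (y i) (3 * ρ))); split.
      move=> i a b; rewrite /dball /= => ha hb.
      apply: (le_trans (dtri dm a (y i) b)); rewrite (dsym dm a).
      lra.
    by move=> e /hall [i hi]; exists i.
  by rewrite card_ord ltNge hm'.
have [e [Ce he]] : exists e, C e /\ forall i : 'I_m, ~ d (y i) e < 3 * ρ.
  apply: contrapT => hne; apply: hnc => e Ce; apply: contrapT => hni.
  apply: hne; exists e; split => // i hi; apply: hni; by exists i.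
have [y' Gy' ey'] := hcl e Ce ρ r0.
have far i : (i < m)%N -> 2 * ρ <= d (y i) y'.
  move=> im; have := he (Ordinal im); move/negP; rewrite -leNgt /= => h1.
  have h2 := dtri dm (y i) y' e; rewrite (dsym dm y' e) in h2.
  lra.
exists (fun i => if i == m then y' else y i); split.
  by move=> i; rewrite ltnS leq_eqVlt; case: eqP => // _ /= /hG.
move=> i j hi hj ij.
move: hi hj; rewrite !ltnS => hi hj.
case: (eqVneq i m) => [ei|im]; case: (eqVneq j m) => [ej|jm].
- by move: ij; rewrite ei ej eqxx.
- have hj' : (j < m)%N by rewrite ltn_neqAle jm hj.
  by rewrite (dsym dm); exact: far.
- have hi' : (i < m)%N by rewrite ltn_neqAle im hi.
  exact: far.
- have hi' : (i < m)%N by rewrite ltn_neqAle im hi.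
  have hj' : (j < m)%N by rewrite ltn_neqAle jm hj.
  exact: hsep.
Qed.


Definition gF (A : set T) (δ : R) : \bar R :=
  match cover_number d δ A with
  | EFin n => (ln n / (- ln δ))%:E
  | +oo%E => +oo%E
  | -oo%E => -oo%E end.


Lemma lnd_pos (δ : R) : 0 < δ < 1 -> 0 < - ln δ.
Proof. by move=> h; rewrite oppr_gt0; apply: ln_lt0. Qed.

Lemma g_ge0 A (δ : R) : 0 < δ < 1 -> (0 <= gF A δ)%E.
Proof.
move=> hδ; rewrite /gF; case: (cn_cases δ A) => [[-> _]|[k [-> _ _]]].
  by rewrite leey.
rewrite lee_fin; apply: divr_ge0; last by apply: ltW; apply: lnd_pos.
case: k => [|k]; first by rewrite ln0.
by apply: ln_ge0; rewrite ler1n.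
Qed.

Lemma g_lt A (δ t : R) : 0 < δ < 1 -> (gF A δ < t%:E)%E ->
  exists (I : finType) U, cvr δ A I U /\ #|I|%:R < δ `^ (-t).
Proof.
move=> hδ; rewrite /gF; case: (cn_cases δ A) => [[-> _]|[k [-> hk _]]] //.
rewrite lte_fin => hlt.
have [U hU] := cvr_covset _ _ _ hk; exists 'I_k, U; split => //; rewrite card_ord.
have hl := lnd_pos _ hδ; move: hlt; rewrite ltr_pdivrMr // => hlt.
rewrite /powR gt_eqF; last by case/andP: hδ.
case: k {hk U hU} hlt => [|k] hlt; first by rewrite expR_gt0.
rewrite -[X in X < _](@lnK _ k.+1%:R) ?posrE ?ltr0n // ltr_expR.
by rewrite mulNr -mulrN.
Qed.

Lemma g_gt A (δ t : R) : 0 < δ < 1 -> 0 <= t -> (t%:E < gF A δ)%E ->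
  forall (I : finType) U, cvr δ A I U -> δ `^ (-t) < #|I|%:R.
Proof.
move=> hδ t0; rewrite /gF.
case: (cn_cases δ A) => [[-> hno]|[k [-> hk hmin]]] h I U hc.
  by exfalso; apply: (hno #|I|); exact: covset_cvr _ _ _ _ hc.
move: h; rewrite lte_fin ltr_pdivlMr ?lnd_pos // => h.
have hkI := hmin _ (covset_cvr _ _ _ _ hc).
apply: (@lt_le_trans _ _ k%:R); last by rewrite ler_nat.
case: k {hk hmin hkI} h => [|k] h.
  exfalso; have h0 : 0 <= t * - ln δ by rewrite mulr_ge0 // ltW // lnd_pos.
  by move: (le_lt_trans h0 h); rewrite ln0 // ltxx.
rewrite /powR gt_eqF; last by case/andP: hδ.
rewrite -[X in _ < X](@lnK _ k.+1%:R) ?posrE ?ltr0n // ltr_expR.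
by rewrite mulNr -mulrN.
Qed.


Lemma pd_ge0 (s δ : R) A : (0 <= packing_delta d s δ A)%E.
Proof.
apply: le_ereal_sup_tmp.
have x0 : 'I_0 -> T by move=> [m hm]; exfalso; rewrite ltn0 in hm.
exists 0%E => //.
exists 0%N, x0, (fun _ => 0); split; try by move=> [m hm]; exfalso; rewrite ltn0 in hm.
by rewrite big_ord0.
Qed.

Lemma pm_ge0 (s : R) A : (0 <= packing_premeasure d s A)%E.
Proof. by apply: limsup0_ge => δ _; exact: pd_ge0. Qed.

Lemma pmeas_zero (s : R) A : packing_premeasure d s A = 0%E ->
  packing_measure d s A = 0%E.
Proof.
move=> h; apply/eqP; rewrite eq_le; apply/andP; split.
  apply: ge_ereal_inf; exists 0%E => //; exists (fun _ => A).
    by move=> x Ax; exists 0%N.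
  by apply: eseries0 => i _ _ /=.
apply/ereal_infP => _ [G hG <-]; apply: nneseries_ge0 => n _ _; exact: pm_ge0.
Qed.

Lemma pm_zero (A : set T) (s t : R) : 0 <= t -> t < s ->
  (exists2 ε1 : R, 0 < ε1 & forall δ, 0 < δ < ε1 ->
     exists (I : finType) U, cvr δ A I U /\ #|I|%:R < δ `^ (-t)) ->
  packing_premeasure d s A = 0%E.
Proof.
move=> t0 ts [ε1 ε10 hcov].
apply/eqP; rewrite eq_le pm_ge0 andbT.
apply: limsup0_le => η η0.
set Cst := 2 `^ s * (2^-1) `^ (-t) / (1 - (2^-1) `^ (s - t)).
have st0 : 0 < s - t by rewrite subr_gt0.
have C0 : 0 <= Cst.
  rewrite /Cst mulr_ge0 ?mulr_ge0 ?powR_ge0 // invr_ge0 subr_ge0 ltW //.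
  exact: halfpow_lt1.
pose δ0 := (η / (Cst + 1)) `^ ((s - t)^-1).
have C10 : 0 < Cst + 1 by rewrite ltr_wpDl.
have δ00 : 0 < δ0 by apply: powR_gt0; rewrite divr_gt0.
exists (Order.min ε1 δ0); first by rewrite lt_min ε10 δ00.
move=> δ /andP[δp]; rewrite lt_min => /andP[hδ1 hδ0].
apply/ereal_supP => _ [n [x [r [hxr hdis ->]]]].
rewrite sumEFin lee_fin.
have q0 : (0 : R) < 2^-1 by rewrite invr_gt0.
have q1 : (2^-1 : R) < 1 by rewrite invf_lt1 // ltr1n.
apply: le_trans.
  apply: (dyadic_bound t0 ts δp) => [i|j]; first by case: (hxr i).
  set ρ := (2^-1) ^+ j.+1 * δ.
  have ρ0 : 0 < ρ by rewrite mulr_gt0 // exprn_gt0.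
  have ρ1 : ρ < ε1.
    apply: le_lt_trans hδ1; rewrite /ρ ler_piMl ?(ltW δp) //.
    by rewrite exprn_ile1 // ltW.
  have [I [U [hU hI]]] := hcov ρ (introT andP (conj ρ0 ρ1)).
  apply: le_trans (ltW hI); rewrite ler_nat.
  apply: (pack_count _ _ _ _ _ x r hU) => [i|i|]; first by case: (hxr i).
    by case: (hxr i) => _ /andP[].
  exact: hdis.
have hpow : δ `^ (s - t) <= η / (Cst + 1).
  have -> : η / (Cst + 1) = δ0 `^ (s - t).
    rewrite /δ0 -powRrM mulVf ?gt_eqF // powRr1 //.
    by rewrite divr_ge0 // ltW.
  apply: ge0_ler_powR; rewrite ?nnegrE ?ltW //.
apply: le_trans (ler_wpM2l C0 hpow) _.
rewrite mulrCA -[X in _ <= X]mulr1; apply: ler_wpM2l; first exact: ltW.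
by rewrite ler_pdivrMr // mul1r lerDl.
Qed.


Lemma B_ge0 (A : set T) : (0 <= upper_box_dim d A)%E.
Proof.
change (0 <= limsup0 (gF A))%E; apply: limsup0_ge => δ hδ; exact: g_ge0.
Qed.

Lemma upper_part (A : set T) (s : R) : (upper_box_dim d A < s%:E)%E ->
  packing_measure d s A = 0%E.
Proof.
move=> hB; have B0 := B_ge0 A.
have hf : upper_box_dim d A \is a fin_num.
  by rewrite ge0_fin_numE // (lt_trans hB) // ltry.
set b := fine (upper_box_dim d A).
have eB : upper_box_dim d A = b%:E by rewrite fineK.
rewrite eB lte_fin in hB; rewrite eB lee_fin in B0.
set t := (b + s) / 2.
have t0 : 0 <= t by rewrite /t; lra.
have ts : t < s by rewrite /t; lra.
have hBt : (limsup0 (gF A) < t%:E)%E.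
  by change (upper_box_dim d A < t%:E)%E; rewrite eB lte_fin /t; lra.
have [ε0 ε00 hε0] := limsup0_lt hBt.
apply: pmeas_zero; apply: (pm_zero _ _ _ t0 ts).
exists (Order.min ε0 1); first by rewrite lt_min ε00 ltr01.
move=> δ /andP[δp]; rewrite lt_min => /andP[h1 h2].
apply: g_lt; first by rewrite δp h2.
by apply: hε0; rewrite δp h1.
Qed.


Lemma baire w (G : nat -> set T) : Att w `<=` \bigcup_(i in setT) G i ->
  exists i k (v : Word w), forall e, cyl w k v e ->
    forall eps : R, 0 < eps -> exists2 y, G i y & d e y < eps.
Proof.
move=> hcov; apply: contrapT => hno.
have H i k (v : Word w) : exists y, cyl w k v y /\
    exists2 r : R, 0 < r & forall z, d y z < r -> ~ G i z.
  apply: contrapT => hn; apply: hno; exists i, k, v => e he eps eps0.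
  apply: contrapT => hne; apply: hn; exists e; split => //.
  by exists eps => // z hz Gz; apply: hne; exists z.
have [a [b [a0 a1 b0 b1 hab]]] := contr_consts.
have [D [D0 hD]] := dbounded dm dc.
have Hstep (i : nat) (p : {k : nat & Word w}) : exists p' : {k : nat & Word w},
  [/\ (projT1 p <= projT1 p')%N, agree (projT1 p) (projT2 p) (projT2 p') &
    forall z, (forall eps : R, 0 < eps ->
       exists2 c, cyl w (projT1 p') (projT2 p') c & d z c < eps) -> ~ G i z].
  case: p => k v /=.
  have [y [hy [r r0 hr]]] := H i k v.
  have hq : 0 <= b < 1 by rewrite b0 b1.
  have [m hm] := exists_pow_lt hq (divr_gt0 (divr_gt0 r0 (ltr0n _ 2)) (ltr_wpDl D0 ltr01)).
  have [v' [hag hc]] := cyl_refine k w v y hy m.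
  exists (existT _ (k + m)%N v'); split => //=; first exact: leq_addr.
  move=> z hz Gz.
  have r20 : 0 < r / 2 by rewrite divr_gt0.
  have [c hc' hzc] := hz (r / 2) r20.
  have dyc := cyl_diam D b hD b0 (fun i j x y => (hab i j x y).2) (k + m) w v' y c hc hc'.
  have hbm : b ^+ (k + m) <= b ^+ m by apply: ler_wiXn2l => //; [exact: ltW|exact: leq_addl].
  have h1 : b ^+ (k + m) * D <= b ^+ m * (D + 1).
    apply: le_trans (_ : b ^+ m * D <= _); first by apply: ler_wpM2r.
    by apply: ler_wpM2l; [exact: exprn_ge0|rewrite lerDl].
  have h2 : b ^+ m * (D + 1) < r / 2.
    by move: hm; rewrite ltr_pdivlMr // ?ltr_wpDl.
  have h3 := dtri dm y c z; rewrite (dsym dm c z) in h3.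
  apply: (hr z) => //; lra.
pose st i := projT1 (choice (Hstep i)).
have hst i := projT2 (choice (Hstep i)).
pose fix sq (n : nat) : {k : nat & Word w} :=
  match n with 0 => existT _ 0%N (wdef w) | n'.+1 => st n' (sq n') end.
pose Cn n := cyl w (projT1 (sq n)) (projT2 (sq n)).
have Cnest n : Cn n.+1 `<=` Cn n.
  have [hle hag _] := hst n (sq n).
  move=> x hx.
  have := cyl_nest (projT1 (sq n)) (projT1 (sq n.+1) - projT1 (sq n))%N w (projT2 (sq n)) (projT2 (sq n.+1)) hag x.
  by rewrite subnKC //; apply.
have Cne n : exists y, Cn n y by have [y [hy _]] := H 0%N (projT1 (sq n)) (projT2 (sq n)); exists y.
have [[z hz]|hnz] := pselect (exists z, forall n, ~ dint d (~` Cn n) z); last first.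
  have [|||K hK] := @compact_incr R T d dc (fun n => dint d (~` Cn n)).
  - by move=> n; exact: dint_open.
  - by move=> n; apply: dint_mono => x hx hx'; apply: hx; exact: Cnest.
  - move=> x; apply: contrapT => hx; apply: hnz; exists x => n hn; apply: hx.
    by exists n.
  have [y hy] := Cne K.
  by have := dint_sub dm (hK y); apply.
have hcl n : forall eps : R, 0 < eps -> exists2 c, Cn n c & d z c < eps.
  move=> eps eps0; apply: contrapT => hne; apply: (hz n).
  by exists eps => // c hc hCc; apply: hne; exists c.
have Fz : Att w z.
  apply: contrapT => hnF; have [e e0 he] := att_closed w z hnF.
  have [c hc hzc] := hcl 0%N e e0; apply: (he c hzc).
  exact: cyl_att hc.
have [i _ Gi] := hcov z Fz.
have [_ _ hG] := hst i (sq i).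
exact: (hG z (hcl i.+1)).
Qed.


Lemma Pw_gt0 w k : (0 < Pw w k)%N.
Proof. by elim: k w => [|k IH] w //=; rewrite muln_gt0 HM IH. Qed.

Lemma cyl_pm w k (v : Word w) (G : set T) (s t : R) : 0 <= s -> s < t ->
  (t%:E < upper_box_dim d (Att w))%E ->
  (forall e, cyl w k v e -> forall eps : R, 0 < eps -> exists2 y, G y & d e y < eps) ->
  (1 <= packing_premeasure d s G)%E.
Proof.
move=> s0 st hB hcl.
have [a [b [a0 a1 b0 b1 hab]]] := contr_consts.
set P := Pw w k.
have P0 : (0 : R) < P%:R by rewrite ltr0n; exact: Pw_gt0.
set ak := a ^+ k.
have ak0 : 0 < ak by rewrite exprn_gt0.
have ak1 : ak <= 1 by rewrite exprn_ile1 // ltW.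
have ak30 : 0 < ak / 3 by rewrite divr_gt0.
set K0 := P%:R / (ak / 3) `^ s.
have K00 : 0 < K0 by rewrite divr_gt0 // powR_gt0.
set u := t - s.
have u0 : 0 < u by rewrite subr_gt0.
set e2 := K0^-1 `^ (u^-1).
have e20 : 0 < e2 by rewrite powR_gt0 // invr_gt0.
apply/ereal_infP => _ [ε ε0 <-].
set ε2 := Order.min (Order.min ε 1) e2.
have ε20 : 0 < ε2 by rewrite !lt_min ε0 ltr01 e20.
have [δ' [/andP[δ0 hδ] hgt]] := limsup0_gt hB ε20.
move: hδ; rewrite !lt_min => /andP[/andP[hδε hδ1] hδe].
have t0 : 0 <= t by apply: ltW; exact: le_lt_trans st.
have hcv := g_gt (Att w) δ' t (introT andP (conj δ0 hδ1)) t0 hgt.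
set ρ := δ' * ak / 6.
have ρ0 : 0 < ρ by rewrite divr_gt0 // mulr_gt0.
set X := δ' `^ (-t) / P%:R.
have X0 : 0 < X by rewrite divr_gt0 // powR_gt0.
have hX : forall (I : finType) U, cvr (6 * ρ) (cyl w k v) I U -> X < #|I|%:R.
  move=> I U hU.
  have [J [U' [hJ eJ]]] := cyl_cover a a0 (fun i j x y => (hab i j x y).1) k w v (6 * ρ) I U hU.
  have e6 : 6 * ρ / a ^+ k = δ'.
    by rewrite /ρ /ak; field; rewrite ?gt_eqF // exprn_gt0.
  rewrite e6 in hJ; have := hcv J U' hJ; rewrite eJ natrM.
  by rewrite /X ltr_pdivrMr // mulrC.
have [t1 _] : exists t1 : T, True.
  apply: contrapT => hnT.
  have : X < #|'I_0|%:R.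
    apply: (hX 'I_0 (fun _ => set0)); split => // x _; exfalso; apply: hnT; by exists x.
  by rewrite card_ord ltNge ltW.
set m := (Num.truncn X).+1.
have hm : m%:R <= X + 1 by rewrite /m -natr1 lerD2r truncn_le ltW.
have hXm : X < m%:R by rewrite /m truncnS_gt.
have [y [hG hsep]] := greedy t1 ρ (cyl w k v) G X ρ0 hcl hX m hm.
have ρε : ρ < ε.
  apply: le_lt_trans hδε; rewrite /ρ ler_pdivrMr //.
  by apply: ler_wpM2l; [exact: ltW|lra].
apply: le_ereal_sup_tmp; exists (packing_delta d s ρ G); first by exists ρ => //=; apply/andP; split.
apply: le_ereal_sup_tmp; exists ((m%:R * (2 * ρ) `^ s)%:E).
  exists m, (fun i => y i), (fun _ => ρ); split.
  - by move=> i; split; [exact: hG|rewrite ρ0 lexx].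
  - move=> i j ij; apply/seteqP; split => // z [/= h1 h2].
    have hij : (i : nat) != j by [].
    have := hsep i j (ltn_ord i) (ltn_ord j) hij.
    have h3 := dtri dm (y i) z (y j); rewrite (dsym dm z) in h3.
    rewrite /dball /= in h1 h2; lra.
  - by rewrite sumEFin sumr_const card_ord mulr_natl.
rewrite lee_fin.
have e1 : X * (2 * ρ) `^ s = (δ' `^ u)^-1 / K0.
  have e2r : 2 * ρ = δ' * (ak / 3) by rewrite /ρ; field.
  rewrite e2r powRM ?(ltW δ0) ?(ltW ak30) // /X /K0 /u.
  have -> : δ' `^ (t - s) = (δ' `^ (-t) * δ' `^ s)^-1.
    rewrite -powRD; last by rewrite (gt_eqF δ0) implybT.
    by rewrite -powRN opprD opprK addrC.
  field; rewrite ?gt_eqF ?powR_gt0 //.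
have e3 : δ' `^ u <= K0^-1.
  have -> : K0^-1 = e2 `^ u by rewrite /e2 -powRrM mulVf ?gt_eqF // powRr1 // invr_ge0 ltW.
  by apply: ge0_ler_powR; rewrite ?nnegrE ?ltW.
have e4 : 1 <= (δ' `^ u)^-1 / K0.
  rewrite ler_pdivlMr // mul1r -[K0]invrK lef_pV2 ?posrE ?invr_gt0 ?powR_gt0 //.
apply: le_trans e4 _; rewrite -e1.
by apply: ler_wpM2r; [exact: powR_ge0|exact: ltW].
Qed.


Lemma main_eq w : packing_dim d (Att w) = upper_box_dim d (Att w).
Proof.
set F := Att w.
apply/eqP; rewrite eq_le; apply/andP; split.
  have B0 := B_ge0 F.
  have [->|hB] := eqVneq (upper_box_dim d F) +oo%E; first exact: leey.
  have hf : upper_box_dim d F \is a fin_num by rewrite ge0_fin_numE // ltey.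
  rewrite -(fineK hf); apply/lee_addgt0Pr => e e0.
  apply: ge_ereal_inf; exists (fine (upper_box_dim d F) + e)%:E; last by rewrite EFinD.
  exists (fine (upper_box_dim d F) + e) => //; split.
    by rewrite addr_ge0 ?(ltW e0) // -lee_fin fineK.
  by apply: upper_part; rewrite -[X in (X < _)%E](fineK hf) lte_fin ltrDl.
apply/ereal_infP => _ [s [s0 hs] <-].
rewrite leNgt; apply/negP => hlt.
have [t [st tB]] : exists t : R, s < t /\ (t%:E < upper_box_dim d F)%E.
  move: hlt; case: (upper_box_dim d F) => [b| |] hlt.
  - by exists ((s + b) / 2); rewrite lte_fin in hlt; split; [lra|rewrite lte_fin; lra].
  - by exists (s + 1); split; [lra|exact: ltry].
  - by [].
have : (1 <= packing_measure d s F)%E.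
  apply/ereal_infP => _ [G hG <-].
  have [i [k [v hcl]]] := baire w G hG.
  have h1 := cyl_pm w k v (G i) s t s0 st tB hcl.
  apply: le_trans h1 _.
  have := @nneseries_lim_ge R (fun j => packing_premeasure d s (G j)) xpredT 0%N i.+1
    (fun n _ _ => pm_ge0 s (G n)).
  apply: le_trans.
  rewrite big_nat_recr //=; apply: lee_paddl => //.
  by apply: sume_ge0 => n _; exact: pm_ge0.
by rewrite hs lee_fin ler10.
Qed.

End IFS.

Theorem lemma3p2 (R : realType) (T : Type) (d : T -> T -> R)
  (N : nat) (M : 'I_N -> nat) (S : forall i : 'I_N, 'I_(M i) -> T -> T) :
  is_metric d -> d_compact_space d ->
  (forall i, (0 < M i)%N) ->
  (forall i j, bilip_contraction d (S i j)) ->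
  forall w : nat -> 'I_N,
    packing_dim d (rifs_attractor S w) = upper_box_dim d (rifs_attractor S w).
Proof.
move=> dm dc HM HS w.
exact: (main_eq R T d dm N M S HM HS dc w).
Qed.
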